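(* Let $m,n\in\mathbb N$, $M_A=M_m(\mathbb C)$, $M_B=M_n(\mathbb C)$, and let $U_A\in M_A$, $U_B\in M_B$ be unitary matrices. If a quantum $U_A\otimes U_B$-state $\rho\in M_A\otimes M_B$ is $U_A\otimes U_B$-separable, then $\rho$ is $U_A\otimes U_B$-positive partial transpose, i.e. $(\overline{U_A}\otimes U_B^* )\,\rho^{\tau}$ is positive semidefinite, where $\rho^\tau=(t\otimes\mathrm{id})(\rho)$, $t$ is the transpose on $M_A$, and $\overline{U_A}$ is the entrywise complex conjugate of $U_A$.
   Context: For a unitary $U\in M_k(\mathbb C)$, a matrix $X\in M_k(\mathbb C)$ is $U$-positive if $U^*X$ is positive semidefinite, and is a quantum $U$-state if moreover $\mathrm{Tr}(U^*X)=1$. A quantum $U_A\otimes U_B$-state $\rho\in M_A\otimes M_B$ is a product $U_A\otimes U_B$-state if $\rho=\rho_A\otimes\rho_B$ with $\rho_A\in M_A$ $U_A$-positive and $\rho_B\in M_B$ $U_B$-positive; it is $U_A\otimes U_B$-separable if it is a convex combination of product $U_A\otimes U_B$-states. *)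

(* Defs.v *)
(* Complex numbers are modelled as R[i] = complex R for an
   arbitrary R : realType (mathcomp-analysis); for R = the reals this is C. *)
From HB Require Import structures.
From mathcomp Require Import all_boot all_order all_algebra.
From mathcomp Require Import sesquilinear spectral.
From mathcomp Require Import complex mxtens.
From mathcomp Require Import reals.
Set Implicit Arguments. Unset Strict Implicit. Unset Printing Implicit Defensive.
Import Order.TTheory GRing.Theory Num.Theory.
Local Open Scope ring_scope.
Local Open Scope sesquilinear_scope.

Section QDefs.
Variable C : numClosedFieldType.

(* positive semidefinite: <v, A v> >= 0 for every vector v
   (over C, 0 <= z means z is real and nonnegative) *)
Definition psdmx k (A : 'M[C]_k) : Prop :=
  forall v : 'cV[C]_k, 0 <= (v ^t* *m A *m v) 0 0.

Definition U_positive k (U X : 'M[C]_k) : Prop := psdmx (U ^t* *m X).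

Definition U_state k (U X : 'M[C]_k) : Prop :=
  U_positive U X /\ \tr (U ^t* *m X) = 1.

Definition product_state m n (UA : 'M[C]_m) (UB : 'M[C]_n)
    (rho : 'M[C]_(m * n)) : Prop :=
  U_state (UA *t UB) rho /\
  exists (rA : 'M[C]_m) (rB : 'M[C]_n),
    [/\ rho = rA *t rB, U_positive UA rA & U_positive UB rB].

Definition separable m n (UA : 'M[C]_m) (UB : 'M[C]_n)
    (rho : 'M[C]_(m * n)) : Prop :=
  exists (K : nat) (p : 'I_K -> C) (sigma : 'I_K -> 'M[C]_(m * n)),
    [/\ forall i, 0 <= p i,
        \sum_i p i = 1,
        forall i, product_state UA UB (sigma i)
      & rho = \sum_i p i *: sigma i].

(* partial transpose (t (x) id) on M_m (x) M_n, w.r.t. the tensmx indexing: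
   entry ((i,j),(k,l)) of rho^tau is entry ((k,j),(i,l)) of rho *)
Definition ptrans m n (rho : 'M[C]_(m * n)) : 'M[C]_(m * n) :=
  \matrix_(a, b)
    rho (mxtens_index ((mxtens_unindex b).1, (mxtens_unindex a).2))
        (mxtens_index ((mxtens_unindex a).1, (mxtens_unindex b).2)).

Definition conjmx_entry k (U : 'M[C]_k) : 'M[C]_k := map_mx Num.conj U.

End QDefs.

(* Main.v *)
Require Import Defs.
From HB Require Import structures.
From mathcomp Require Import all_boot all_order all_algebra.
From mathcomp Require Import sesquilinear spectral.
From mathcomp Require Import complex mxtens.
From mathcomp Require Import reals.
From mathcomp Require Import ring.
Set Implicit Arguments. Unset Strict Implicit. Unset Printing Implicit Defensive.
Import Order.TTheory GRing.Theory Num.Theory.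
Local Open Scope ring_scope.
Local Open Scope sesquilinear_scope.

Section Aux.
Variable C : numClosedFieldType.

Lemma trCmul m n p (A : 'M[C]_(m, n)) (B : 'M[C]_(n, p)) :
  (A *m B)^t* = B^t* *m A^t*.
Proof. by rewrite trmx_mul map_mxM. Qed.

Lemma psd_congr k l (M : 'M[C]_k) (Q : 'M[C]_(k, l)) :
  psdmx M -> psdmx (Q^t* *m M *m Q).
Proof.
move=> hM v; have := hM (Q *m v).
by rewrite trCmul !mulmxA.
Qed.

Lemma psd0 k : psdmx (0 : 'M[C]_k).
Proof. by move=> v; rewrite mulmx0 mul0mx mxE. Qed.

Lemma psdD k (A B : 'M[C]_k) : psdmx A -> psdmx B -> psdmx (A + B).
Proof.
move=> hA hB v; rewrite mulmxDr mulmxDl mxE; exact: addr_ge0.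
Qed.

Lemma psdZ k c (A : 'M[C]_k) : 0 <= c -> psdmx A -> psdmx (c *: A).
Proof.
move=> hc hA v; rewrite -scalemxAr -scalemxAl mxE; exact: mulr_ge0.
Qed.

Lemma psd_sum I (r : seq I) (P : pred I) k (F : I -> 'M[C]_k) :
  (forall i, P i -> psdmx (F i)) -> psdmx (\sum_(i <- r | P i) F i).
Proof.
move=> h; elim/big_ind: _ => //; [exact: psd0 | exact: psdD].
Qed.

Lemma psd_tr k (A : 'M[C]_k) : psdmx A -> psdmx A^T.
Proof.
move=> hA v; have := hA (map_mx Num.conj v).
have e1 : forall M : 'M[C]_1, M 0 0 = M^T 0 0 by move=> M; rewrite [RHS]mxE.
rewrite [X in _ -> _ <= X]e1.
rewrite !trmx_mul trmxK mulmxA.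
have -> : (v ^t*)^T = map_mx Num.conj v by rewrite map_trmx trmxK.
have -> : v^T = (map_mx Num.conj v)^t*.
  by apply/matrixP => i j; rewrite !mxE conjCK.
by [].
Qed.

Definition bf k (A : 'M[C]_k) (u w : 'cV[C]_k) := (u^t* *m A *m w) 0 0.

Lemma bf_delta k (A : 'M[C]_k) i j : bf A (delta_mx i 0) (delta_mx j 0) = A i j.
Proof.
rewrite /bf.
have -> : (delta_mx i 0 : 'cV[C]_k)^t* = delta_mx 0 i.
  by apply/matrixP => a b; rewrite !mxE conjC_nat andbC.
by rewrite -(rowE i A) -colE !mxE.
Qed.

Lemma bfDl k (A : 'M[C]_k) u1 u2 w : bf A (u1 + u2) w = bf A u1 w + bf A u2 w.
Proof. by rewrite /bf linearD /= map_mxD !mulmxDl mxE. Qed.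
Lemma bfDr k (A : 'M[C]_k) u w1 w2 : bf A u (w1 + w2) = bf A u w1 + bf A u w2.
Proof. by rewrite /bf !mulmxDr mxE. Qed.
Lemma bfZl k (A : 'M[C]_k) c u w : bf A (c *: u) w = c^* * bf A u w.
Proof. by rewrite /bf linearZ /= map_mxZ -!scalemxAl mxE. Qed.
Lemma bfZr k (A : 'M[C]_k) c u w : bf A u (c *: w) = c * bf A u w.
Proof. by rewrite /bf -!scalemxAr mxE. Qed.

Lemma psd_conj k (A : 'M[C]_k) v : psdmx A -> (bf A v v)^* = bf A v v.
Proof. by move=> hA; apply: conj_Creal; apply: ger0_real; apply: hA. Qed.

Lemma psd_herm_entry k (A : 'M[C]_k) i j : psdmx A -> (A j i)^* = A i j.
Proof.
move=> hA.
set u : 'cV[C]_k := delta_mx i 0; set w : 'cV[C]_k := delta_mx j 0.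
have <- : bf A u w = A i j by apply: bf_delta.
have <- : bf A w u = A j i by apply: bf_delta.
set x := bf A u w; set y := bf A w u.
have hu := psd_conj u hA; have hw := psd_conj w hA.
have e1 := psd_conj (u + w) hA.
rewrite !bfDl !bfDr -/x -/y !rmorphD /= hu hw in e1.
have e2 := psd_conj (u + 'i *: w) hA.
rewrite !bfDl !bfDr !bfZl !bfZr -/x -/y !rmorphD !rmorphM /= hu hw conjCi in e2.
rewrite rmorphN /= conjCi opprK in e2.
move/eqP: e1; rewrite -subr_eq0 => /eqP e1.
move/eqP: e2; rewrite -subr_eq0 => /eqP e2.
have H : 'i * ((y^* - x) * 2) = 'i * 0 + 0.
  rewrite -{1}e1 -e2; ring.
move/eqP: H; rewrite mulr0 addr0 mulf_eq0 (negbTE (neq0Ci _)) /=.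
rewrite mulf_eq0 pnatr_eq0 orbF subr_eq0 => /eqP //.
Qed.

Lemma psd_herm k (A : 'M[C]_k) : psdmx A -> A \is hermsymmx.
Proof.
move=> hA; apply/is_hermitianmxP; rewrite expr0 scale1r.
by apply/matrixP => i j; rewrite !mxE psd_herm_entry.
Qed.

Lemma tensC m n p q (X : 'M[C]_(m, n)) (Y : 'M[C]_(p, q)) :
  (X *t Y)^t* = X^t* *t Y^t*.
Proof. by apply/matrixP => i j; rewrite !mxE rmorphM. Qed.

Lemma trC1 k : (1%:M : 'M[C]_k)^t* = 1%:M.
Proof. by apply/matrixP => i j; rewrite !mxE conjC_nat eq_sym. Qed.

Lemma psd_cast k k' (e : k = k') (A : 'M[C]_k) : psdmx A -> psdmx (castmx (e, e) A).
Proof. by case: k' / e; rewrite castmx_id. Qed.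

Lemma psd_tens_delta m n (A : 'M[C]_m) (l : 'I_n) :
  psdmx A -> psdmx (A *t (delta_mx l l : 'M[C]_n)).
Proof.
move=> hA.
have h1 : psdmx (A *t (1%:M : 'M[C]_1)).
  by rewrite tens_mx_scalar scale1r; apply: psd_cast.
have := psd_congr ((1%:M : 'M[C]_m) *t (delta_mx 0 l : 'M[C]_(1, n))) h1.
rewrite tensC !tensmx_mul trC1 mulmx1 mul1mx.
have -> : (delta_mx 0 l : 'M[C]_(1, n))^t* = delta_mx l 0.
  by apply/matrixP => a b; rewrite !mxE conjC_nat andbC.
by rewrite mulmx1 mul_delta_mx.
Qed.

Lemma diag_sum n (d : 'rV[C]_n) : diag_mx d = \sum_l d 0 l *: delta_mx l l.
Proof.
apply/matrixP => i j; rewrite summxE (bigD1 i) //= big1 ?addr0.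
  by rewrite !mxE eqxx /= mulr_natr eq_sym.
by move=> l /negbTE hl; rewrite !mxE eq_sym hl mulr0.
Qed.

Lemma tens_sumr m n (A : 'M[C]_m) (c : 'I_n -> C) (E : 'I_n -> 'M[C]_n) :
  A *t (\sum_l c l *: E l) = \sum_l c l *: (A *t E l).
Proof.
apply/matrixP => i j; rewrite !mxE !summxE mulr_sumr; apply: eq_bigr => l _.
by rewrite !mxE mulrCA.
Qed.

Lemma psd_tens m n (A : 'M[C]_m) (B : 'M[C]_n) :
  psdmx A -> psdmx B -> psdmx (A *t B).
Proof.
move=> hA hB.
have /hermitian_normalmx /orthomx_spectralP eB := psd_herm hB.
set P := spectralmx B in eB; set d := spectral_diag B in eB.
have uP : P \is unitarymx by apply: spectral_unitarymx.
rewrite invmx_unitary // in eB.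
have hD : psdmx (diag_mx d).
  have := psd_congr (P^t*) hB; rewrite trmxCK eB !mulmxA (unitarymxP uP) mul1mx.
  by rewrite -mulmxA (unitarymxP uP) mulmx1.
have dge0 : forall l, 0 <= d 0 l.
  move=> l; have := hD (delta_mx l 0); rewrite -/(bf _ _ _) bf_delta.
  by rewrite mxE eqxx mulr1n.
have -> : A *t B = (1%:M *t P)^t* *m (A *t diag_mx d) *m (1%:M *t P).
  by rewrite tensC trC1 !tensmx_mul mulmx1 mul1mx -eB.
apply: psd_congr; rewrite diag_sum tens_sumr; apply: psd_sum => l _.
by apply: psdZ => //; apply: psd_tens_delta.
Qed.

Lemma ptrans_tens m n (X : 'M[C]_m) (Y : 'M[C]_n) : ptrans (X *t Y) = X^T *t Y.
Proof.
apply/matrixP => a b.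
case: (mxtens_indexP a) => i j; case: (mxtens_indexP b) => k l.
by rewrite /ptrans mxE !mxtens_indexK /= !tensmxE mxE.
Qed.

Lemma ptrans_sum m n K (p : 'I_K -> C) (s : 'I_K -> 'M[C]_(m * n)) :
  ptrans (\sum_i p i *: s i) = \sum_i p i *: ptrans (s i).
Proof.
apply/matrixP => a b; rewrite mxE !summxE; apply: eq_bigr => i _.
by rewrite !mxE.
Qed.

End Aux.

Theorem proposition5p7 (R : realType) (m n : nat)
    (UA : 'M[R[i]]_m) (UB : 'M[R[i]]_n) (rho : 'M[R[i]]_(m * n)) :
  UA \is unitarymx -> UB \is unitarymx ->
  U_state (UA *t UB) rho ->
  separable UA UB rho ->
  psdmx ((conjmx_entry UA *t UB ^t*) *m ptrans rho).
Proof.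
move=> hUA _ _ [K [p [sigma [hp _ hs ->]]]].
rewrite ptrans_sum mulmx_sumr; apply: psd_sum => i _.
rewrite -scalemxAr; apply: psdZ; first exact: hp.
case: (hs i) => _ [rA [rB [-> hA hB]]].
rewrite ptrans_tens tensmx_mul; apply: psd_tens => //.
have -> : conjmx_entry UA *m rA^T = (rA *m UA^t*)^T.
  by rewrite trmx_mul map_trmx trmxK.
apply: psd_tr.
have -> : rA *m UA^t* = UA^t*^t* *m (UA^t* *m rA) *m UA^t*.
  by rewrite trmxCK mulmxA (unitarymxP hUA) mul1mx.
exact: psd_congr.
Qed.
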